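(* Let $L\geq 1$ be an integer, $P\geq 0$, and $p_B\in[0,1]$. Let $\beta_1,\ldots,\beta_L$ be i.i.d. with $\mathbb{P}(\beta_l=0)=p_B$, $\mathbb{P}(\beta_l=1)=1-p_B$, and $\theta_1,\ldots,\theta_L$ i.i.d. $\mathrm{Uniform}(0,2\pi)$ independent of the $\beta_l$. Set $\mathbf{h}=[\beta_1e^{j\theta_1},\ldots,\beta_Le^{j\theta_L}]^{\mathsf T}$ and $\alpha=\sum_{l=1}^L\beta_l$. Then $$\sup\Big\{\mathbb{E}\big[\log(1+\mathbf{h}^{\mathsf H}\mathbf{Q}\mathbf{h})\big]\;:\;\mathbf{Q}\in\mathbb{C}^{L\times L}\text{ Hermitian positive semidefinite},\ [\mathbf{Q}]_{l,l}\leq P\ \forall l\Big\}=\mathbb{E}[\log(1+\alpha P)],$$ i.e. the ergodic capacity without channel state information at the transmitters equals the one with knowledge of the blockage state $\boldsymbol{\beta}$ at the transmitters.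
   Context: The supremum is over input covariance matrices that do not depend on the channel state (no transmitter channel state information). $\log$ is the logarithm in a fixed base; $\alpha\sim\mathrm{Binomial}(L,1-p_B)$ is the number of non-blocked transmitters. *)

(* Defs.v *)
From HB Require Import structures.
From mathcomp Require Import all_boot all_order all_algebra.
From mathcomp Require Import complex.
From mathcomp Require Import all_classical all_reals all_analysis.
Set Implicit Arguments. Unset Strict Implicit. Unset Printing Implicit Defensive.
Import Order.TTheory GRing.Theory Num.Theory.
Local Open Scope ring_scope.
Local Open Scope classical_set_scope.

Definition logb (R : realType) (b x : R) : R := ln x / ln b.

Definition unif_avg (R : realType) (f : R -> R) : R :=
  (2 * pi)^-1 * Rintegral (@lebesgue_measure R) `[0, 2 * pi]%classic f.

(* expectation of g(theta_0, ..., theta_{n-1}) for theta_i i.i.d.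
   Uniform(0, 2 pi), as an iterated integral over each coordinate. *)
Fixpoint iid_unif_exp (R : realType) (n : nat) (g : (nat -> R) -> R) : R :=
  match n with
  | 0 => g (fun _ => 0)
  | m.+1 => unif_avg (fun x =>
       iid_unif_exp m (fun t => g (fun k => if k == m then x else t k)))
  end.

Definition beta_prob (R : realType) (L : nat) (pB : R)
  (beta : {ffun 'I_L -> bool}) : R :=
  \prod_(l < L) (if beta l then 1 - pB else pB).

Definition expj (R : realType) (t : R) : R[i] := (cos t +i* sin t)%C.

Definition chan (R : realType) (L : nat) (beta : {ffun 'I_L -> bool})
  (theta : nat -> R) : 'cV[R[i]]_L :=
  \col_(l < L) ((beta l)%:R * expj (theta l)).

Definition ctrmx (R : realType) (m n : nat) (A : 'M[R[i]]_(m, n)) :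
  'M[R[i]]_(n, m) := (map_mx conjc A)^T.

Definition hermitian_psd (R : realType) (L : nat) (Q : 'M[R[i]]_L) : Prop :=
  ctrmx Q = Q /\ forall v : 'cV[R[i]]_L, 0 <= (ctrmx v *m Q *m v) 0 0.

Definition ergodic_rate (R : realType) (L : nat) (pB b : R)
  (Q : 'M[R[i]]_L) : R :=
  \sum_(beta : {ffun 'I_L -> bool}) beta_prob pB beta *
    iid_unif_exp L (fun theta =>
      logb b (1 + complex.Re ((ctrmx (chan beta theta) *m Q *m chan beta theta) 0 0))).

Definition blockage_rate (R : realType) (L : nat) (pB b P : R) : R :=
  \sum_(beta : {ffun 'I_L -> bool}) beta_prob pB beta *
    logb b (1 + (\sum_(l < L) (beta l : nat))%:R * P).

(* Main.v *)
Require Import Defs.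
From HB Require Import structures.
From mathcomp Require Import all_boot all_order all_algebra.
From mathcomp Require Import complex.
From mathcomp Require Import all_classical all_reals all_analysis.
From mathcomp Require Import ring lra.
Import Order.TTheory GRing.Theory Num.Theory.
Import numFieldNormedType.Exports.
Local Open Scope ring_scope.
Local Open Scope classical_set_scope.

Section S.
Variable R : realType.

Lemma ge0_le_int_nm (D : set R) (f g : R -> \bar R) :
  (forall x, D x -> (0 <= f x)%E) -> (forall x, D x -> (f x <= g x)%E) ->
  (\int[@lebesgue_measure R]_(x in D) f x <= \int[@lebesgue_measure R]_(x in D) g x)%E.
Proof.
move=> f0 fg.
have g0 : forall x, D x -> (0 <= g x)%E by move=> x Dx; exact: le_trans (f0 x Dx) (fg x Dx).
rewrite !ge0_integralE//; apply: ereal_sup_le => _ [h hf <-]; exists h => // x.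
apply: le_trans (hf x) _; rewrite /patch; case: ifP => // /set_mem Dx; exact: fg.
Qed.

Lemma le_Rint (D : set R) (mD : measurable D) (f g : R -> R) :
  (forall x, D x -> 0 <= f x <= g x) ->
  (@lebesgue_measure R).-integrable D (EFin \o g) ->
  Rintegral (@lebesgue_measure R) D f <= Rintegral (@lebesgue_measure R) D g.
Proof.
move=> fg ig.
have le : (\int[@lebesgue_measure R]_(x in D) (f x)%:E <= \int[@lebesgue_measure R]_(x in D) (g x)%:E)%E.
  apply: ge0_le_int_nm => x Dx; rewrite lee_fin; by case/andP: (fg x Dx).
have gf : (\int[@lebesgue_measure R]_(x in D) (g x)%:E)%E \is a fin_num by apply: integrable_fin_num.
have f0 : (0 <= \int[@lebesgue_measure R]_(x in D) (f x)%:E)%E.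
  apply: integral_ge0 => x Dx; rewrite lee_fin; by case/andP: (fg x Dx).
apply: fine_le => //.
rewrite ge0_fin_numE //; apply: le_lt_trans le _.
by move: gf; rewrite fin_numE => /andP[_]; rewrite lt_neqAle leey andbT.
Qed.

Lemma Rint_ge0 (D : set R) (f : R -> R) :
  (forall x, D x -> 0 <= f x) -> 0 <= Rintegral (@lebesgue_measure R) D f.
Proof.
move=> f0; apply: fine_ge0; apply: integral_ge0 => x Dx; rewrite lee_fin; exact: f0.
Qed.

Lemma cont_of_der (f df : R -> R) :
  (forall x : R, is_derive x (1:R) f (df x)) -> forall x : R, {for x, continuous f}.
Proof.
move=> d x; apply: differentiable_continuous; apply/derivable1_diffP.
by case: (d x).
Qed.

Lemma trig_int (a0 a1 a2 : R) :
  Rintegral (@lebesgue_measure R) `[0, 2 * pi]%classic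
    (fun x => a0 + a1 * cos x + a2 * sin x) = a0 * (2 * pi).
Proof.
pose F x := a0 * x + a1 * sin x - a2 * cos x.
have dF (x : R) : is_derive x (1:R) F (a0 + a1 * cos x + a2 * sin x).
  apply: is_derive_eq.
  change (a0 * 1 + a1 * cos x - a2 * - sin x = a0 + a1 * cos x + a2 * sin x).
  by rewrite mulr1 mulrN opprK.
pose G x := a0 + a1 * cos x + a2 * sin x.
have dG (x : R) : is_derive x (1:R) G (a2 * cos x - a1 * sin x).
  apply: is_derive_eq.
  change ((0 + 1) * (a1 * - sin x) + a2 * cos x = a2 * cos x - a1 * sin x).
  by rewrite add0r mul1r mulrN addrC.
have cF := @cont_of_der _ _ dF.
have cG := @cont_of_der _ _ dG.
have pi2 : 0 < 2 * pi :> R by rewrite mulr_gt0 // pi_gt0.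
rewrite /Rintegral (@continuous_FTC2 _ _ F) //=.
  have e2 : 2 * pi = pi *+ 2 :> R by rewrite mulr_natl.
  rewrite /F /= mulr0 sin0 cos0 e2 cos2pi sin2pi; lra.
- change {within `[0, 2 * pi], continuous G}.
  by apply: continuous_subspaceT => x; exact: cG.
- split.
  + by move=> x _; case: (dF x).
  + exact: cvg_at_right_filter (cF 0).
  + exact: cvg_at_left_filter (cF _).
- move=> x _; rewrite derive1E; exact: derive_val.
Qed.

Lemma trig_cont (a0 a1 a2 : R) :
  {within `[0, 2 * pi], continuous (fun x : R => a0 + a1 * cos x + a2 * sin x)}.
Proof.
pose G x := a0 + a1 * cos x + a2 * sin x.
have dG (x : R) : is_derive x (1:R) G (a2 * cos x - a1 * sin x).
  apply: is_derive_eq.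
  change ((0 + 1) * (a1 * - sin x) + a2 * cos x = a2 * cos x - a1 * sin x).
  by rewrite add0r mul1r mulrN addrC.
have cG := @cont_of_der _ _ dG.
by apply: continuous_subspaceT => x; exact: cG.
Qed.

Lemma unif_avg_ge0 (f : R -> R) : (forall x, 0 <= f x) -> 0 <= unif_avg f.
Proof.
move=> f0; rewrite /unif_avg; apply: mulr_ge0.
  by rewrite invr_ge0 mulr_ge0 // pi_ge0.
by apply: Rint_ge0 => x _.
Qed.

Lemma unif_avg_cst (c : R) : unif_avg (fun _ => c) = c.
Proof.
rewrite /unif_avg.
have -> : (fun _ : R => c) = (fun x => c + 0 * cos x + 0 * sin x).
  by apply: funext => x; rewrite !mul0r !addr0.
have pn : 2 * pi != 0 :> R by rewrite gt_eqF // mulr_gt0 // pi_gt0.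
by rewrite trig_int mulrCA mulVf ?mulr1.
Qed.

Lemma ln_tangent (A y : R) : 0 < A -> 0 < y -> ln y <= ln A + (y - A) / A.
Proof.
move=> A0 y0.
have An : A != 0 by rewrite gt_eqF.
have e1 : y = A * (y / A) by field.
have yA : 0 < y / A by rewrite divr_gt0.
rewrite [X in ln X]e1 lnM ?posrE // lerD2l.
have -> : (y - A) / A = y / A - 1 by field.
have h := @le_ln1Dx R (y / A - 1).
have e : 1 + (y / A - 1) = y / A by rewrite addrCA subrr addr0.
rewrite e in h; apply: h.
by rewrite ltrBrDl subrr.
Qed.

Lemma jensen1 (b A p s : R) (u : R -> R) : 1 < b -> 0 < A ->
  (forall x, 0 < A + p * cos x + s * sin x) ->
  (forall x, 0 <= u x <= logb b (A + p * cos x + s * sin x)) ->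
  unif_avg u <= logb b A.
Proof.
move=> b1 A0 pos uG.
have lb : 0 < ln b by apply: ln_gt0.
pose k := (A * ln b)^-1.
have -> : logb b A = unif_avg (fun x => logb b A + (p * k) * cos x + (s * k) * sin x).
  have pn : 2 * pi != 0 :> R by rewrite gt_eqF // mulr_gt0 // pi_gt0.
  by rewrite /unif_avg trig_int mulrCA mulVf ?mulr1.
rewrite /unif_avg; apply: ler_wpM2l.
  by rewrite invr_ge0 mulr_ge0 // pi_ge0.
apply: le_Rint.
- exact: measurable_itv.
- move=> x _; case/andP: (uG x) => -> /= /le_trans; apply.
  have h := @ln_tangent A _ A0 (pos x).
  set y := A + p * cos x + s * sin x in h *.
  have An : A != 0 by rewrite gt_eqF.
  have bn : ln b != 0 by rewrite gt_eqF.
  have -> : logb b A + p * k * cos x + s * k * sin x = (ln A + (y - A) / A) / ln b.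
    by rewrite /y /k /logb; field; rewrite bn An.
  by rewrite /logb ler_pdivlMr ?divfK // ?invr_gt0.
- apply: continuous_compact_integrable; first exact: segment_compact.
  exact: trig_cont.
Qed.
End S.

Section Q.
Variable R : realType.
Variable L : nat.
Variable Q : 'M[R[i]]_L.
Hypothesis QH : ctrmx Q = Q.

Definition qc (v : 'cV[R[i]]_L) : R[i] := (ctrmx v *m Q *m v) 0 0.

Lemma ctrmxD (m n : nat) (A B : 'M[R[i]]_(m, n)) : ctrmx (A + B) = ctrmx A + ctrmx B.
Proof. by apply/matrixP => i j; rewrite !mxE rmorphD. Qed.

Lemma ctrmxZ (m n : nat) (z : R[i]) (A : 'M[R[i]]_(m, n)) : ctrmx (z *: A) = z^*%C *: ctrmx A.
Proof. by apply/matrixP => i j; rewrite !mxE rmorphM. Qed.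

Lemma ctrmxM (m n p : nat) (A : 'M[R[i]]_(m, n)) (B : 'M[R[i]]_(n, p)) :
  ctrmx (A *m B) = ctrmx B *m ctrmx A.
Proof. by rewrite /ctrmx map_mxM trmx_mul. Qed.

Lemma ctrmx_delta (n : 'I_L) : ctrmx (@delta_mx R[i] L 1 n 0) = delta_mx 0 n.
Proof.
apply/matrixP => i j; rewrite !mxE.
by rewrite conjc_nat andbC.
Qed.

Lemma mx_delta_r (m : nat) (A : 'M[R[i]]_(m, L)) (n : 'I_L) (k : 'I_m) :
  (A *m delta_mx n (0 : 'I_1)) k 0 = A k n.
Proof. by rewrite -colE mxE. Qed.

Lemma mx_delta_l (p : nat) (A : 'M[R[i]]_(L, p)) (n : 'I_L) (k : 'I_p) :
  (delta_mx (0 : 'I_1) n *m A) 0 k = A n k.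
Proof. by rewrite -rowE mxE. Qed.

Lemma addE' (A B : 'M[R[i]]_(1,1)) : (A + B) 0 0 = A 0 0 + B 0 0.
Proof. by rewrite mxE. Qed.
Lemma scaleE' (z : R[i]) (A : 'M[R[i]]_(1,1)) : (z *: A) 0 0 = z * A 0 0.
Proof. by rewrite mxE. Qed.

Lemma qc_split (a : 'cV[R[i]]_L) (z : R[i]) (n : 'I_L) :
  qc (a + z *: delta_mx n 0) =
  qc a + z^*%C * z * Q n n + (z^*%C * (Q *m a) n 0 + (z^*%C * (Q *m a) n 0)^*%C).
Proof.
rewrite /qc ctrmxD ctrmxZ ctrmx_delta.
rewrite !mulmxDl !mulmxDr -!scalemxAl -!scalemxAr.
rewrite !addE' !scaleE' !mx_delta_r -!mulmxA !mx_delta_l.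
have -> : (ctrmx a *m Q) 0 n = ((Q *m a) n 0)^*%C.
  by rewrite -{1}QH -ctrmxM !mxE.
set X := (Q *m a) n 0.
have -> : (z^*%C * X)^*%C = z * X^*%C.
  by case: z => zr zi; case: X => xr xi; apply/eqP; rewrite eq_complex /=; apply/andP; split; apply/eqP; ring.
ring.
Qed.

Lemma ReD' (x y : R[i]) : complex.Re (x + y) = complex.Re x + complex.Re y.
Proof. by case: x => ? ?; case: y => ? ?. Qed.

Lemma Re_conj_add (w : R[i]) : complex.Re (w + w^*%C) = 2 * complex.Re w.
Proof. case: w => wr wi /=; ring. Qed.

Lemma qr_split (a : 'cV[R[i]]_L) (bt : bool) (x : R) (n : 'I_L) :
  complex.Re (qc (a + ((bt%:R : R[i]) * expj x) *: delta_mx n 0)) =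
  complex.Re (qc a) + (bt%:R : R) * complex.Re (Q n n) + (2 * bt%:R * complex.Re ((Q *m a) n 0)) * cos x
   + (2 * bt%:R * complex.Im ((Q *m a) n 0)) * sin x.
Proof.
rewrite qc_split ReD' Re_conj_add ReD'.
have h := cos2Dsin2 x.
case: (Q n n) => qr qi; case: ((Q *m a) n 0) => xr xi.
set A := complex.Re (qc a).
case: bt; rewrite /expj /=; last by ring.
transitivity (A + (cos x ^+ 2 + sin x ^+ 2) * qr + 2 * xr * cos x + 2 * xi * sin x).
  by ring.
by rewrite h; ring.
Qed.
End Q.


Section Main.
Variable R : realType.
Variable L : nat.
Variable Q : 'M[R[i]]_L.
Hypothesis Qpsd : hermitian_psd Q.
Variable beta : {ffun 'I_L -> bool}.
Variable b : R.
Hypothesis b1 : 1 < b.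

Let QH : ctrmx Q = Q. Proof. by case: Qpsd. Qed.
Local Notation qq := (@qc R L Q).

Lemma qc_ge0 v : 0 <= complex.Re (qq v).
Proof.
case: Qpsd => _ /(_ v); rewrite lecE => /andP[_]; done.
Qed.

Lemma qc_delta (l : 'I_L) : qq (delta_mx l 0) = Q l l.
Proof. by rewrite /qc ctrmx_delta mx_delta_r mx_delta_l. Qed.

Lemma diag_ge0 (l : 'I_L) : 0 <= complex.Re (Q l l).
Proof. by rewrite -qc_delta qc_ge0. Qed.

Definition vecn n (t : nat -> R) (w : 'cV[R[i]]_L) : 'cV[R[i]]_L :=
  \col_(l < L) (if (l < n)%N then ((beta l)%:R * expj (t l)) else w l 0).
Definition w0 n (w : 'cV[R[i]]_L) : 'cV[R[i]]_L :=
  \col_(l < L) (if (l < n)%N then 0 else w l 0).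
Definition Sn n : R := \sum_(l < L | (l < n)%N) ((beta l)%:R : R) * complex.Re (Q l l).

Lemma Sn_ge0 n : 0 <= Sn n.
Proof.
apply: sumr_ge0 => l _; apply: mulr_ge0 => //; exact: diag_ge0.
Qed.

Lemma logb_ge0 y : 1 <= y -> 0 <= logb b y.
Proof.
move=> y1; rewrite /logb divr_ge0 //; first exact: ln_ge0.
by apply: ln_ge0; apply: ltW.
Qed.

Lemma iid_ge0 n (g : (nat -> R) -> R) : (forall t, 0 <= g t) -> 0 <= iid_unif_exp n g.
Proof.
elim: n g => [|n IH] g g0 //=.
by apply: unif_avg_ge0 => x; apply: IH => t.
Qed.


Lemma vecn_upd n (hn : (n < L)%N) t x w :
  vecn n.+1 (fun k => if k == n then x else t k) w =
  vecn n t (w0 n.+1 w + (((beta (Ordinal hn))%:R : R[i]) * expj x) *: delta_mx (Ordinal hn) 0).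
Proof.
apply/matrixP => l j; have -> : j = 0 by apply/val_inj; case: j => [[]].
rewrite !mxE /=.
case: (ltngtP l n) => hl.
- by rewrite ltnS (ltnW hl).
- rewrite ltnS leqNgt hl /=.
  have -> : (l == Ordinal hn) = false by apply/negbTE; rewrite -val_eqE /= gtn_eqF.
  by rewrite mulr0 addr0.
- have el : l = Ordinal hn by apply/val_inj; rewrite /= hl.
  by rewrite el /= ltnS leqnn eqxx add0r mulr1.
Qed.

Lemma w0_idem n (hn : (n < L)%N) w z :
  w0 n (w0 n.+1 w + z *: delta_mx (Ordinal hn) 0) = w0 n.+1 w + z *: delta_mx (Ordinal hn) 0.
Proof.
apply/matrixP => l j; have -> : j = 0 by apply/val_inj; case: j => [[]].
rewrite !mxE /=.
case: (ltnP l n) => hl //.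
have -> : (l == Ordinal hn) = false by apply/negbTE; rewrite -val_eqE /= ltn_eqF.
by rewrite ltnS (ltnW hl) mulr0 addr0.
Qed.

Lemma Sn_S n (hn : (n < L)%N) :
  Sn n.+1 = Sn n + ((beta (Ordinal hn))%:R : R) * complex.Re (Q (Ordinal hn) (Ordinal hn)).
Proof.
rewrite /Sn (bigD1 (Ordinal hn)) //= addrC; congr (_ + _).
apply: eq_bigl => l; rewrite -val_eqE /= ltnS leq_eqVlt.
by case: (ltngtP l n).
Qed.


Lemma arg_ge1 c n v : 0 <= c -> 1 <= 1 + c + Sn n + complex.Re (qq v).
Proof.
move=> c0; have := Sn_ge0 n; have := qc_ge0 v; lra.
Qed.

Lemma main_ind n : (n <= L)%N -> forall (c : R) w, 0 <= c ->
  iid_unif_exp n (fun t => logb b (1 + c + complex.Re (qq (vecn n t w))))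
  <= logb b (1 + c + Sn n + complex.Re (qq (w0 n w))).
Proof.
elim: n => [|n IH] hn c w c0.
  rewrite /=.
  have -> : vecn 0 (fun _ => 0) w = w.
    by apply/matrixP => l j; rewrite mxE /=; have -> : j = 0 by apply/val_inj; case: j => [[]].
  have -> : w0 0 w = w.
    by apply/matrixP => l j; rewrite mxE /=; have -> : j = 0 by apply/val_inj; case: j => [[]].
  have -> : Sn 0 = 0 by rewrite /Sn big1.
  by rewrite addr0.
have hn' : (n < L)%N by [].
set N := Ordinal hn'.
set bN := beta N.
set a := w0 n.+1 w.
set X := (Q *m a) N 0.
pose p := 2 * (bN%:R : R) * complex.Re X.
pose s := 2 * (bN%:R : R) * complex.Im X.
pose A := 1 + c + Sn n.+1 + complex.Re (qq a).
have key x : 1 + c + Sn n + complex.Re (qq (w0 n (a + (((bN)%:R : R[i]) * expj x) *: delta_mx N 0)))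
    = A + p * cos x + s * sin x.
  rewrite w0_idem qr_split // /A (@Sn_S n hn') -/N -/bN -/X /p /s; ring.
have A1 : 1 <= A by apply: arg_ge1.
rewrite /=.
apply: (@jensen1 _ b A p s) => //.
- by apply: lt_le_trans A1.
- move=> x; rewrite -key.
  have := arg_ge1 c n (w0 n (a + (((bN)%:R : R[i]) * expj x) *: delta_mx N 0)) c0; lra.
- move=> x; apply/andP; split.
    apply: iid_ge0 => t; apply: logb_ge0; have := qc_ge0 (vecn n.+1 (fun k => if k == n then x else t k) w); lra.
  rewrite -key.
  have -> : (fun t => logb b (1 + c + complex.Re (qq (vecn n.+1 (fun k => if k == n then x else t k) w))))
      = (fun t => logb b (1 + c + complex.Re (qq (vecn n t (a + (((bN)%:R : R[i]) * expj x) *: delta_mx N 0))))).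
    by apply: funext => t; rewrite vecn_upd.
  exact: (IH (ltnW hn) c _ c0).
Qed.

Lemma logb_le x y : 0 < x -> x <= y -> logb b x <= logb b y.
Proof.
move=> x0 xy; rewrite /logb ler_pM2r ?invr_gt0 ?ln_gt0 //.
by rewrite ler_ln ?posrE // (lt_le_trans x0).
Qed.

Lemma per_beta_bound (P : R) : (forall l : 'I_L, Q l l <= (P%:C)%C) ->
  iid_unif_exp L (fun t => logb b (1 + complex.Re ((ctrmx (chan beta t) *m Q *m chan beta t) 0 0)))
  <= logb b (1 + (\sum_(l < L) (beta l : nat))%:R * P).
Proof.
move=> hd.
have := @main_ind L (leqnn L) 0 0 (lexx 0).
have -> : (fun t => logb b (1 + 0 + complex.Re (qq (vecn L t 0)))) =
          (fun t => logb b (1 + complex.Re ((ctrmx (chan beta t) *m Q *m chan beta t) 0 0))).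
  apply: funext => t; rewrite addr0; congr (logb b (1 + complex.Re _)).
  rewrite /qc; congr ((ctrmx _ *m Q *m _) 0 0);
   by apply/matrixP => l j; rewrite !mxE ltn_ord.
move/le_trans; apply.
have -> : w0 L 0 = 0 by apply/matrixP => l j; rewrite !mxE; case: ifP.
have -> : qq 0 = 0 by rewrite /qc mulmx0 mxE.
rewrite addr0 addr0; apply: logb_le.
  have := Sn_ge0 L; lra.
rewrite lerD2l /Sn natr_sum mulr_suml.
rewrite (eq_bigl (fun _ => true)); last by move=> l; rewrite ltn_ord.
apply: ler_sum => l _.
move: (hd l); rewrite lecE => /andP[_ hl].
by case: (beta l) => /=; rewrite ?mul0r // !mul1r.
Qed.

End Main.

Lemma iid_cst (R : realType) n (K : R) : iid_unif_exp n (fun _ => K) = K.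
Proof. by elim: n => [|n IH] //=; rewrite IH unif_avg_cst. Qed.

Lemma beta_prob_ge0 (R : realType) (L : nat) (pB : R) (beta : {ffun 'I_L -> bool}) : 0 <= pB <= 1 -> 0 <= Defs.beta_prob pB beta.
Proof.
case/andP=> p0 p1; apply: prodr_ge0 => l _; case: (beta l) => //.
by rewrite subr_ge0.
Qed.

Lemma scalar_psd (R : realType) (L : nat) (P : R) : 0 <= P -> hermitian_psd ((P%:C)%C%:M : 'M[R[i]]_L).
Proof.
move=> P0; split.
  apply/matrixP => i j; rewrite !mxE eq_sym; case: (i == j); rewrite ?mulr1n ?mulr0n ?conjc_real ?conjc0 //.
move=> v; rewrite mul_mx_scalar -scalemxAl mxE.
apply: mulr_ge0; first by rewrite ler0c.
rewrite mxE; apply: sumr_ge0 => j _; rewrite !mxE mulrC; exact: mulcJ_ge0.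
Qed.

Lemma scalar_rate (R : realType) (L : nat) (P pB b : R) :
  ergodic_rate pB b ((P%:C)%C%:M : 'M[R[i]]_L) = blockage_rate L pB b P.
Proof.
apply: eq_bigr => beta _; congr (_ * _).
rewrite -[RHS](iid_cst _ L); congr iid_unif_exp; apply: funext => t.
congr (logb b (1 + _)).
rewrite mul_mx_scalar -scalemxAl mxE mxE.
have e j : (ctrmx (chan beta t)) 0 j * chan beta t j 0 = (((beta j : nat)%:R : R)%:C)%C.
  rewrite !mxE /expj; have h := cos2Dsin2 (t j).
  case: (beta j) => /=; apply/eqP; rewrite eq_complex /=; apply/andP; split; apply/eqP.
  - by transitivity (cos (t j) ^+ 2 + sin (t j) ^+ 2); [ring | exact: h].
  - by ring.
  - by ring.
  - by ring.
rewrite (eq_bigr _ (fun j _ => e j)) -rmorph_sum -rmorphM /=.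
by rewrite natr_sum mulrC.
Qed.

Lemma rate_ub (R : realType) (L : nat) (P pB b : R) (Q : 'M[R[i]]_L) :
  0 <= pB <= 1 -> 1 < b -> hermitian_psd Q -> (forall l : 'I_L, Q l l <= (P%:C)%C) ->
  ergodic_rate pB b Q <= blockage_rate L pB b P.
Proof.
move=> hp hb hQ hd; apply: ler_sum => beta _.
apply: ler_wpM2l; first exact: beta_prob_ge0.
exact: per_beta_bound.
Qed.

Theorem corollary1 (R : realType) (L : nat) (P pB b : R) :
  (1 <= L)%N -> 0 <= P -> 0 <= pB <= 1 -> 1 < b ->
  sup [set @ergodic_rate R L pB b Q | Q in
        [set Q : 'M[R[i]]_L | hermitian_psd Q /\
                              forall l : 'I_L, Q l l <= (P%:C)%C]]
  = @blockage_rate R L pB b P.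
Proof.
move=> _ P0 hp hb.
set S := [set _ | _ in _].
have inS : S (blockage_rate L pB b P).
  exists ((P%:C)%C%:M); last exact: scalar_rate.
  split; first exact: scalar_psd.
  by move=> l; rewrite mxE eqxx mulr1n.
have ub : ubound S (blockage_rate L pB b P).
  by move=> _ [Q [hQ hd] <-]; exact: rate_ub.
apply/eqP; rewrite eq_le; apply/andP; split.
  by apply: ge_sup => //; exists (blockage_rate L pB b P).
by apply: ub_le_sup => //; exists (blockage_rate L pB b P).
Qed.
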